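(* Let $S$ be an entropy function for a finite set $X$, $X'\subset X$, and $S'(A):=\min_{\hat A\subseteq X\setminus X'}S(A\cup\hat A)$ for $A\subseteq X'$. For $f':X'\to\mathbb R$ let $f_{f'}:X\to\mathbb R$ equal $f'$ on $X'$ and $0$ on $X\setminus X'$. Then $f'$ is an EDF for $S'$ if and only if $f_{f'}$ is an EDF for $S$.
   Context: An entropy function for a finite set $X$ is a function $S:2^X\to[0,\infty)$ with $S(\emptyset)=0$, $S(A)+S(B)\ge S(A\cap B)+S(A\cup B)$ and $S(A)+S(B)\ge S(A\setminus B)+S(B\setminus A)$ for all $A,B\subseteq X$. An entanglement distribution function (EDF) for $S$ is a function $f:X\to\mathbb R$ with $\big|\sum_{x\in A}f(x)\big|\le S(A)$ for all $A\subseteq X$. *)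

(* Defs.v *)
From mathcomp Require Import all_boot all_order all_algebra.
Set Implicit Arguments. Unset Strict Implicit. Unset Printing Implicit Defensive.
Import Order.TTheory GRing.Theory Num.Theory.
Local Open Scope ring_scope.

Definition entropy_function (R : realFieldType) (X : finType) (S : {set X} -> R) : Prop :=
  [/\ forall A, 0 <= S A,
      S set0 = 0,
      forall A B, S (A :&: B) + S (A :|: B) <= S A + S B &
      forall A B, S (A :\: B) + S (B :\: A) <= S A + S B].

(* f is an EDF for S on the ground set D (only values of f on D matter):
   |sum_{x in A} f x| <= S A for every A subset of D. *)
Definition EDF_on (R : realFieldType) (X : finType) (D : {set X})
    (S : {set X} -> R) (f : X -> R) : Prop :=
  forall A : {set X}, A \subset D -> `|\sum_(x in A) f x| <= S A.

Definition EDF (R : realFieldType) (X : finType) (S : {set X} -> R) (f : X -> R) : Prop :=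
  EDF_on [set: X] S f.

(* S'(A) = min_{Ahat subset X \ X'} S (A :|: Ahat); the seed value S A
   (Ahat = set0) is itself one of the candidates. *)
Definition reduced_entropy (R : realFieldType) (X : finType) (X' : {set X})
    (S : {set X} -> R) (A : {set X}) : R :=
  \big[Order.min/S A]_(B : {set X} | B \subset ~: X') S (A :|: B).

Definition extend_by_zero (R : realFieldType) (X : finType) (X' : {set X})
    (f' : X -> R) : X -> R :=
  fun x => if x \in X' then f' x else 0.

(* Main.v *)
Require Import Defs.
From mathcomp Require Import all_boot all_order all_algebra.
Local Open Scope ring_scope.
Import Order.TTheory GRing.Theory Num.Theory.

Lemma sum_ext (R : realFieldType) (X : finType) (X' : {set X}) (f' : X -> R) (C : {set X}) :
  \sum_(x in C) extend_by_zero X' f' x = \sum_(x in C :&: X') f' x.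
Proof.
rewrite (big_setID X') /= [X in _ + X]big1 ?addr0.
  by apply: eq_bigr => x; rewrite inE /extend_by_zero => /andP[_ ->].
by move=> x; rewrite inE /extend_by_zero => /andP[/negbTE -> _].
Qed.

Theorem proposition27 (R : realFieldType) (X : finType) (S : {set X} -> R)
    (X' : {set X}) (f' : X -> R) :
  entropy_function S ->
  (EDF_on X' (reduced_entropy X' S) f' <-> EDF S (extend_by_zero X' f')).
Proof.
move=> _; split.
- move=> H A _; rewrite sum_ext.
  apply: le_trans (H _ (subsetIr _ _)) _.
  rewrite /reduced_entropy.
  apply: (@bigmin_inf _ _ _ _ (A :\: X')).
    by apply/subsetP => x; rewrite !inE => /andP[].
  by rewrite setID lexx.
- move=> H A AX; rewrite /reduced_entropy; apply: le_bigmin.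
    have := H A (subsetT _); rewrite sum_ext.
    by rewrite (setIidPl AX).
  move=> B BX; have := H (A :|: B) (subsetT _); rewrite sum_ext.
  suff -> : (A :|: B) :&: X' = A by [].
  rewrite setIUl (setIidPl AX).
  have -> : B :&: X' = set0.
    apply/setP => x; rewrite !inE; apply/negbTE/negP => /andP[xB xX].
    by move/subsetP: BX => /(_ x xB); rewrite inE xX.
  by rewrite setU0.
Qed.
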